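(* Let $X$ be an FK-space containing $\phi$ such that every weakly convergent sequence in $X$ converges in the FK-topology of $X$. Then, computed in $X$, $D_p^qS=D_p^qW=D_p^qF=D_p^qF^+$.
   Context: An FK-space is a vector subspace of the space $w$ of all complex sequences with a complete metrizable locally convex topology in which coordinate functionals are continuous; $X'$ is its continuous dual. $\delta^j$ has $1$ in position $j$, $0$ elsewhere; $\phi=\operatorname{span}\{\delta^j\}$. $p(n)<q(n)$ are nonnegative integer sequences with $q(n)\to\infty$. For $x\in w$, $x^{(k)}=\sum_{j=1}^kx_j\delta^j$ and $T_n(x)=\frac{1}{q(n)-p(n)}\sum_{k=p(n)+1}^{q(n)}x^{(k)}$. $D_p^qS=\{x\in X: T_n(x)\to x\text{ in }X\}$; $D_p^qW=\{x\in X: f(T_n(x))\to f(x)\ \forall f\in X'\}$; $D_p^qF^+=\{x\in w:\lim_n f(T_n(x))\text{ exists }\forall f\in X'\}$ (i.e. $(T_n(x))$ is weakly Cauchy in $X$); $D_p^qF=D_p^qF^+\cap X$. *)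

(* Defs.v *)
From HB Require Import structures.
From mathcomp Require Import all_boot all_algebra.
From mathcomp Require Import complex.
From mathcomp Require Import all_classical all_reals all_analysis.
Import GRing.Theory Num.Theory numFieldTopology.Exports numFieldNormedType.Exports.

Set Implicit Arguments.
Unset Strict Implicit.
Unset Printing Implicit Defensive.

Local Open Scope classical_set_scope.
Local Open Scope ring_scope.

Definition cplx (R : realType) : numFieldType := R[i].

(** Sequences in w are maps nat -> C; coordinates are indexed from 0
    (position j of the paper is index j-1 here). *)

Definition delta (R : realType) (j : nat) : nat -> cplx R :=
  fun k => if k == j then 1 else 0.

(** The k-th section x^(k) = sum_{j=1}^k x_j delta^j, i.e. the first k
    coordinates of x (indices 0..k-1), zero elsewhere. *)
Definition sect (R : realType) (k : nat) (x : nat -> cplx R) : nat -> cplx R :=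
  fun j => if (j < k)%N then x j else 0.

(** T_n(x) = 1/(q(n)-p(n)) * sum_{k=p(n)+1}^{q(n)} x^(k) *)
Definition Tn (R : realType) (p q : nat -> nat) (n : nat) (x : nat -> cplx R)
  : nat -> cplx R :=
  fun j => ((q n - p n)%N%:R)^-1 * \sum_(p n <= k < q n) sect k.+1 x j.

Section FK.
Variables (R : realType) (E : tvsType (cplx R)).

Definition in_dual (f : E -> cplx R) : Prop :=
  (forall (a : cplx R) (x y : E), f (a *: x + y) = a * f x + f y) /\ continuous f.

Definition metrizable : Prop :=
  exists d : E -> E -> R,
    [/\ forall x y, 0 <= d x y,
        forall x y, d x y = 0 <-> x = y,
        forall x y, d x y = d y x,
        forall x y z, d x z <= d x y + d y z &
        forall (x : E) (A : set E),
          nbhs x A <-> exists2 eps : R, 0 < eps & [set y | d x y < eps] `<=` A].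

(** Completeness of the (metrizable) topological vector space E w.r.t. its
    canonical (translation-invariant) uniformity: every Cauchy sequence converges. *)
Definition tvs_cauchy_seq (u : nat -> E) : Prop :=
  forall V : set E, nbhs (0 : E) V ->
    exists N : nat, forall m n : nat, (N <= m)%N -> (N <= n)%N -> V (u m - u n).

Definition tvs_complete : Prop :=
  forall u : nat -> E, tvs_cauchy_seq u -> exists l : E, u @ \oo --> l.

(** An FK-space: E is a complete metrizable locally convex space (tvsType is
    locally convex), identified with a vector subspace X = range iota of w via
    the injective linear map iota, such that all coordinate functionals are
    continuous. *)
Definition FK_space (iota : E -> nat -> cplx R) : Prop :=
  [/\ forall (a : cplx R) (x y : E) (j : nat),
        iota (a *: x + y) j = a * iota x j + iota y j,
      injective iota,
      metrizable,
      tvs_complete &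
      forall j : nat, continuous (fun x : E => iota x j)].

Definition contains_phi (iota : E -> nat -> cplx R) : Prop :=
  forall j : nat, exists e : E, iota e = delta R j.

Definition weak_cvg (u : nat -> E) (l : E) : Prop :=
  forall f, in_dual f -> (fun n => f (u n)) @ \oo --> f l.

Definition weak_cauchy (u : nat -> E) : Prop :=
  forall f, in_dual f -> cvgn (fun n => f (u n)).

Variables (iota : E -> nat -> cplx R) (p q : nat -> nat).

(** D_p^q S: x in X with T_n(x) -> x in X.  (T_n(x) lies in phi, a subset of X;
    t n denotes the element of X representing T_n(x).) *)
Definition DS : set (nat -> cplx R) :=
  [set x | exists e : E, iota e = x /\
     exists t : nat -> E, (forall n, iota (t n) = Tn p q n x) /\ t @ \oo --> e].

Definition DW : set (nat -> cplx R) :=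
  [set x | exists e : E, iota e = x /\
     exists t : nat -> E, (forall n, iota (t n) = Tn p q n x) /\ weak_cvg t e].

Definition DFplus : set (nat -> cplx R) :=
  [set x | exists t : nat -> E, (forall n, iota (t n) = Tn p q n x) /\ weak_cauchy t].

Definition DF : set (nat -> cplx R) := DFplus `&` range iota.

End FK.

(* Main.v *)
Require Import Defs.
From HB Require Import structures.
From mathcomp Require Import all_boot all_algebra.
From mathcomp Require Import complex.
From mathcomp Require Import all_classical all_reals all_analysis.
From mathcomp Require Import zify.
Import order.Order.TTheory GRing.Theory Num.Theory numFieldTopology.Exports numFieldNormedType.Exports.
Local Open Scope classical_set_scope.
Local Open Scope ring_scope.

Lemma cnt_bound (j P Q : nat) : (\sum_(P <= k < Q) (k < j)%N <= minn Q j - P)%N.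
Proof.
elim: Q => [|Q IH]; first by rewrite big_geq.
case: (leqP P Q) => PQ.
  rewrite big_nat_recr //=.
  case: (ltnP Q j) => Qj; lia.
rewrite big_geq //.
Qed.

Lemma eps_inv (R : realType) (eps : cplx R) : 0 < eps ->
  exists N : nat, (N.+1%:R : cplx R)^-1 < eps.
Proof.
case: eps => a b; rewrite ltcE /= => /andP[/eqP b0 a0].
have [N HN] : exists N : nat, (N.+1%:R : R)^-1 < a.
  exists (Num.bound a^-1).
  rewrite -[X in _ < X]invrK ltf_pV2 ?posrE ?invr_gt0 //.
  apply: lt_trans (archi_boundP _) _; first by rewrite invr_ge0 ltW.
  by rewrite ltr_nat.
exists N.
have -> : (N.+1%:R : cplx R)^-1 = real_complex R ((N.+1%:R : R)^-1).
  by rewrite fmorphV /= rmorph_nat.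
by rewrite ltcE /= b0 eqxx HN.
Qed.

Lemma Tn_coord (R : realType) (p q : nat -> nat) (x : nat -> cplx R) (j : nat) :
  (forall n, (p n < q n)%N) ->
  (forall M : nat, exists N : nat, forall n, (N <= n)%N -> (M <= q n)%N) ->
  (fun n => Tn p q n x j) @ \oo --> x j.
Proof.
move=> Hp Hq.
pose c n := (\sum_(p n <= k < q n) (k < j)%N)%N.
have E n : Tn p q n x j = x j - ((c n)%:R / (q n - p n)%:R) * x j.
  rewrite /Tn.
  have -> : \sum_(p n <= k < q n) sect k.+1 x j
          = \sum_(p n <= k < q n) (x j - (k < j)%N%:R * x j).
    apply: eq_bigr => k _; rewrite /sect ltnS.
    by case: leqP => _ /=; rewrite ?mul0r ?subr0 ?mul1r ?subrr.
  rewrite sumrB sumr_const_nat -mulr_suml -natr_sum -[x j *+ _]mulr_natl.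
  have D0 : ((q n - p n)%N%:R : cplx R) != 0 by rewrite pnatr_eq0 subn_eq0 -ltnNge.
  by rewrite mulrBr mulrA mulVf // mul1r mulrA [_^-1 * _]mulrC.
have s0 : (fun n => (c n)%:R / (q n - p n)%N%:R : cplx R) @ \oo --> 0.
  apply/cvgr0Pnorm_lt => eps eps0.
  have [N HN] := @eps_inv _ eps eps0.
  have [M HM] := Hq (j * N.+1)%N.
  exists M => // n /HM Hn /=.
  rewrite ger0_norm ?divr_ge0 ?ler0n //.
  apply: le_lt_trans HN.
  have Dp : (0 : cplx R) < (q n - p n)%N%:R by rewrite ltr0n subn_gt0.
  rewrite ler_pdivrMr // ler_pdivlMl ?ltr0n // -natrM ler_nat.
  have := cnt_bound j (p n) (q n); have := Hp n.
  rewrite -/(c n).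
  move: (c n) => cn.
  nia.
have -> : (fun n => Tn p q n x j) = (fun n => x j - (c n)%:R / (q n - p n)%:R * x j).
  by apply/funext => n; rewrite E.
pose s n : cplx R := (c n)%:R / (q n - p n)%N%:R.
have H2 : (fun n => s n * x j) @ \oo --> 0 * x j.
  exact: (cvgMr_tmp s0).
have H3 : (fun n => x j - s n * x j) @ \oo --> x j - 0 * x j.
  apply: (@cvgB _ _ _ _ _ (fun=> x j) (fun n => s n * x j)); last exact: H2.
  exact: cvg_cst.
by rewrite mul0r subr0 in H3.
Qed.

Lemma dual_sub (R : realType) (E : tvsType (cplx R)) (f : E -> cplx R) :
  in_dual f -> forall x y, f (x - y) = f x - f y.
Proof.
case=> lin _ x y.
have := lin (-1) y x; rewrite scaleN1r mulN1r [- y + x]addrC => ->.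
by rewrite addrC.
Qed.

Lemma lim_uniq (R : realType) (u : nat -> cplx R) (a b : cplx R) :
  u @ \oo --> a -> u @ \oo --> b -> a = b.
Proof. move=> ha hb; exact: (cvg_unique _ ha hb). Qed.

Arguments lim_uniq {R u a b}.

Lemma sub_inf (h : nat -> nat) : (forall k, (k <= h k)%N) -> h @ \oo --> \oo.
Proof.
move=> hk P [N _ HN]; exists N => // k /= Nk; apply: HN.
exact: leq_trans Nk (hk k).
Qed.

Section Main.
Variables (R : realType) (E : tvsType (cplx R)) (iota : E -> nat -> cplx R) (p q : nat -> nat).
Hypothesis FK : FK_space iota.
Hypothesis Hw : forall (u : nat -> E) (l : E), weak_cvg u l -> exists l' : E, u @ \oo --> l'.
Hypothesis Hp : forall n, (p n < q n)%N.
Hypothesis Hq : forall M : nat, exists N : nat, forall n, (N <= n)%N -> (M <= q n)%N.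

Lemma coord_dual j : in_dual (fun x : E => iota x j).
Proof. by case: FK => lin _ _ _ cont; split => //; move=> a x y; exact: lin. Qed.

Lemma coord_cvg (u : nat -> E) l j : u @ \oo --> l ->
  (fun n => iota (u n) j) @ \oo --> iota l j.
Proof.
move=> ul; case: FK => _ _ _ _ cont.
exact: (cvg_comp u (fun x => iota x j) ul (cont j l)).
Qed.

Lemma weak_cauchy_cauchy (t : nat -> E) : weak_cauchy t -> tvs_cauchy_seq t.
Proof.
move=> wc V V0.
have [//|nC] := pselect (exists N : nat, forall m n : nat, (N <= m)%N -> (N <= n)%N -> V (t m - t n)).
exfalso.
have H : forall N : nat, exists mn : nat * nat,
    [/\ (N <= mn.1)%N, (N <= mn.2)%N & ~ V (t mn.1 - t mn.2)].
  move=> N; apply: contrapT => h; apply: nC; exists N => m n Nm Nn.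
  by apply: contrapT => nV; apply: h; exists (m, n); split.
have [g Hg] := choice H.
pose w k := t (g k).1 - t (g k).2.
have ww : weak_cvg w 0.
  move=> f fd.
  have f0 : f 0 = 0 by rewrite -(subrr 0) dual_sub // subrr.
  rewrite f0.
  have -> : (fun n => f (w n)) = (fun n => f (t (g n).1) - f (t (g n).2)).
    by apply/funext => n; rewrite /w dual_sub.
  have hL := wc f fd.
  have h1 : (fun k => f (t (g k).1)) @ \oo --> lim ((fun n => f (t n)) @ \oo).
    apply: (cvg_comp (fun k => (g k).1) (fun n => f (t n)) _ hL).
    by apply: sub_inf => k; case: (Hg k).
  have h2 : (fun k => f (t (g k).2)) @ \oo --> lim ((fun n => f (t n)) @ \oo).
    apply: (cvg_comp (fun k => (g k).2) (fun n => f (t n)) _ hL).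
    by apply: sub_inf => k; case: (Hg k).
  have h3 := cvgB (f := fun k => f (t (g k).1)) (g := fun k => f (t (g k).2)) h1 h2.
  rewrite subrr in h3.
  exact: h3.
have [l' hl'] := Hw _ _ ww.
have l0 : l' = 0.
  have inj : injective iota by case: FK.
  apply: inj; apply/funext => j.
  have h1 := coord_cvg _ _ j hl'.
  have h2 : (fun n => iota (w n) j) @ \oo --> iota 0 j := ww _ (coord_dual j).
  exact: (lim_uniq h1 h2).
subst l'.
have [N _ HN] := hl' V V0.
case: (Hg N) => _ _; apply.
exact: (HN N (leqnn N)).
Qed.

Lemma DS_DW : DS iota p q `<=` DW iota p q.
Proof.
move=> x [e [ie [t [it te]]]]; exists e; split => //; exists t; split => //.
move=> f [_ fc].
exact: (cvg_comp t f te (fc e)).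
Qed.

Lemma DW_DF : DW iota p q `<=` DF iota p q.
Proof.
move=> x [e [ie [t [it tw]]]]; split; last first.
  by exists e.
exists t; split; first exact: it.
move=> f fd.
have h := tw f fd.
exact: (cvgP _ h).
Qed.

Lemma DF_DFplus : DF iota p q `<=` DFplus iota p q.
Proof. by move=> x []. Qed.

Lemma DFplus_DS : DFplus iota p q `<=` DS iota p q.
Proof.
move=> x [t [it tc]].
have cau := weak_cauchy_cauchy _ tc.
have [e te] : exists e : E, t @ \oo --> e by case: FK => _ _ _ comp _; have := comp t cau; move=> [e0 he0]; exists e0; exact: he0.
exists e; split; last first.
  by exists t; split; [exact: it | exact: te].
apply/funext => j.
apply: (lim_uniq (coord_cvg _ _ j te)).
have -> : (fun n => iota (t n) j) = (fun n => Tn p q n x j) by apply/funext => n; rewrite it.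
exact: Tn_coord.
Qed.

End Main.

Theorem mainTheorem19 (R : realType) (E : tvsType (cplx R))
  (iota : E -> nat -> cplx R) (p q : nat -> nat) :
  FK_space iota ->
  contains_phi iota ->
  (forall (u : nat -> E) (l : E), weak_cvg u l -> exists l' : E, u @ \oo --> l') ->
  (forall n, (p n < q n)%N) ->
  (forall M : nat, exists N : nat, forall n, (N <= n)%N -> (M <= q n)%N) ->
  DS iota p q = DW iota p q /\ DW iota p q = DF iota p q /\ DF iota p q = DFplus iota p q.
Proof.
move=> FK _ Hw Hp Hq.
have h1 := @DS_DW R E iota p q.
have h2 := @DW_DF R E iota p q.
have h3 := @DF_DFplus R E iota p q.
have h4 := @DFplus_DS R E iota p q FK Hw Hp Hq.
split; [|split]; apply/seteqP; split.
- exact: h1.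
- by move=> x /h2 /h3 /h4.
- exact: h2.
- by move=> x /h3 /h4 /h1.
- exact: h3.
- by move=> x /h4 /h1 /h2.
Qed.
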